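(* Let $F=\frac19\begin{pmatrix}1&1&1\\1&1&1\\1&1&1\end{pmatrix}$ (box blur filter). Then the equation $F*X=B$ with the reflexive boundary condition, for unknown $X\in\mathbb{R}^{m\times n}$, has a unique solution for every $B\in\mathbb{R}^{m\times n}$ if and only if $m,n\notin\{3l: l\in\mathbb{N}\}$.
   Context: $\mathbb{N}=\{1,2,3,\dots\}$. For $F=[f_{ij}]\in\mathbb{R}^{3\times3}$ and $X=[x_{ij}]\in\mathbb{R}^{m\times n}$, the convolution $F*X\in\mathbb{R}^{m\times n}$ is defined by $[F*X]_{ij}=\sum_{l_1=1}^3\sum_{l_2=1}^3 f_{l_1l_2}\,x_{i-l_1+2,\,j-l_2+2}$ for $1\le i\le m$, $1\le j\le n$, where the reflexive boundary condition sets $x_{0j}=x_{1j}$, $x_{m+1,j}=x_{mj}$, $x_{i0}=x_{i1}$, $x_{i,n+1}=x_{in}$ (for all indices $i\in\{0,\dots,m+1\}$, $j\in\{0,\dots,n+1\}$, so corners are also determined, e.g. $x_{00}=x_{11}$). *)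

(* Defs.v *)
From mathcomp Require Import all_boot all_order all_algebra.
From mathcomp Require Import reals.
Set Implicit Arguments. Unset Strict Implicit. Unset Printing Implicit Defensive.
Import GRing.Theory Num.Theory.
Local Open Scope ring_scope.

(* Reflexive boundary: an (extended, 0-based) index k in {-1,...,m} is
   clamped into {0,...,m-1}; here k is given as k+1 (a nat in {0..m+1})
   to avoid negative numbers: refl_idx m k1 is the 0-based index of the 1-based index k1 after reflexive clamping into {1..m+1}. *)
Definition refl_idx (m : nat) (k1 : nat) : 'I_m.+1 :=
  inord (minn k1.-1 m).

(* Paper (1-based): [F*X]_{ij} = sum_{l1,l2=1}^3 f_{l1 l2} x_{i-l1+2, j-l2+2}.
   With 0-based i' = i-1, l1' = l1-1, the row index of x (1-based) is
   i'-l1'+2 = (i'+2-l1'), shifted 0-based index is (i'+1-l1'); we pass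
   (i'+2-l1') = 0-based-index + 1 to refl_idx. *)
Definition conv_refl (R : pzRingType) (m n : nat)
  (F : 'M[R]_3) (X : 'M[R]_(m.+1, n.+1)) : 'M[R]_(m.+1, n.+1) :=
  \matrix_(i < m.+1, j < n.+1)
    \sum_(l1 < 3) \sum_(l2 < 3)
      F l1 l2 * X (refl_idx m (i + 2 - l1)%N) (refl_idx n (j + 2 - l2)%N).

Definition box_blur (R : fieldType) : 'M[R]_3 := \matrix_(i, j) (9%:R)^-1.

(* Main.v *)
Require Import Defs.
From mathcomp Require Import all_boot all_order all_algebra.
From mathcomp Require Import reals.
From mathcomp Require Import zify ring lra.
Set Implicit Arguments. Unset Strict Implicit. Unset Printing Implicit Defensive.
Import GRing.Theory Num.Theory.
Local Open Scope ring_scope.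

Section S.
Variable R : realType.

Definition ff (k : nat) : R := if (k %% 3 == 1)%N then -2 else 1.

Lemma ff_red q k : ff (q * 3 + k) = ff k.
Proof. by rewrite /ff modnMDl. Qed.

Lemma ff_sum k : ff k + ff k.+1 + ff k.+2 = 0.
Proof.
rewrite (divn_eq k 3); set q := (k %/ 3)%N; set r := (k %% 3)%N.
have : (r < 3)%N by rewrite ltn_mod.
rewrite -!addnS !ff_red.
by case: r => [|[|[|]]] //= _; rewrite /ff /=; lra.
Qed.

Lemma ff_end M : ~~ (3 %| M.+2)%N -> ff M + ff M.+1 *+ 2 != 0.
Proof.
rewrite (divn_eq M 3); set q := (M %/ 3)%N; set r := (M %% 3)%N.
have : (r < 3)%N by rewrite ltn_mod.
rewrite -!addnS !ff_red dvdn_addr ?dvdn_mull //.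
by case: r => [|[|[|]]] //= _; rewrite /ff /= => _; apply/eqP; rewrite ?mulr2n; lra.
Qed.

Lemma ff_end0 M : (3 %| M.+2)%N -> ff M + ff M.+1 *+ 2 = 0.
Proof.
rewrite (divn_eq M 3); set q := (M %/ 3)%N; set r := (M %% 3)%N.
have : (r < 3)%N by rewrite ltn_mod.
rewrite -!addnS !ff_red dvdn_addr ?dvdn_mull //.
by case: r => [|[|[|]]] //= _; rewrite /ff /= => _; lra.
Qed.

Lemma refl_val N k : nat_of_ord (refl_idx N k) = minn k.-1 N.
Proof. by rewrite /refl_idx inordK // ltnS geq_minr. Qed.

Lemma ker1 N (x : 'I_N.+1 -> R) : ~~ (3 %| N.+1)%N ->
  (forall i : 'I_N.+1, \sum_(l < 3) x (refl_idx N (i + 2 - l)) = 0) -> forall i, x i = 0.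
Proof.
move=> h3 hE.
pose y k := x (inord k).
have E : forall i, (i <= N)%N -> y (minn i.+1 N) + y i + y i.-1 = 0.
  move=> i iN; have := hE (inord i); rewrite !big_ord_recl big_ord0 addr0 /= /refl_idx inordK ?ltnS //.
  rewrite /bump /= (_ : (i + 2 - 0).-1 = i.+1); last by lia.
  rewrite (_ : (i + 2 - 1).-1 = i); last by lia.
  rewrite (_ : (i + 2 - 2).-1 = i.-1); last by lia.
  rewrite (minn_idPl iN) (minn_idPl (leq_trans (leq_pred i) iN)) /y; lra.
have ind : forall k, (k <= N)%N -> y k = ff k * y 0 /\ ((k < N)%N -> y k.+1 = ff k.+1 * y 0).
  elim=> [|k IH] kN.
    split; first by rewrite /ff mul1r.
    move=> N1; have := E 0%N (leq0n _); rewrite (minn_idPl N1) /ff /=; lra.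
  have [_ IH2] := IH (ltnW kN); split; first exact: IH2.
  move=> kN2; have := E k.+1 kN; rewrite (minn_idPl kN2) /= (IH2 kN).
  have := ff_sum k; have [-> _] := IH (ltnW kN); move=> hs h; rewrite (_ : ff k.+2 = - ff k - ff k.+1); last lra.
  rewrite mulrBl mulNr; lra.
have y0 : y 0%N = 0.
  have [N0|Npos] := posnP N.
    have := E 0%N (leq0n _); rewrite N0 /=; lra.
  have NM := prednK Npos; set M := N.-1 in NM; rewrite -NM in h3.
  have := E N (leqnn _); rewrite /= (minn_idPr (leqnSn _)) -NM /=.
  have [-> _] := ind M.+1 (eq_leq NM); have [-> _] := ind M (leq_trans (leqnSn M) (eq_leq NM)).
  have := ff_end h3; set a := ff M; set b := ff M.+1 => /eqP hab.
  move=> h; apply/eqP; apply: contraT => hy; exfalso; apply: hab; apply: (mulIf hy); rewrite mul0r mulrDl mulr2n mulrDl; lra.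
move=> i; have [+ _] := ind i (ltn_ord i); rewrite y0 mulr0 /y inord_val //.
Qed.
Lemma wsum N (i : 'I_N.+1) : (3 %| N.+1)%N ->
  \sum_(l < 3) ff (refl_idx N (i + 2 - l)) = 0.
Proof.
move=> d3; rewrite !big_ord_recl big_ord0 addr0 /= !refl_val /bump /=.
have iN : (i <= N)%N by rewrite -ltnS.
rewrite (_ : (i + 2 - 0).-1 = i.+1); last by lia.
rewrite (_ : (i + 2 - 1).-1 = i); last by lia.
rewrite (_ : (i + 2 - 2).-1 = i.-1); last by lia.
rewrite (minn_idPl iN) (minn_idPl (leq_trans (leq_pred i) iN)).
have N2 : (2 <= N)%N by move/dvdn_leq: d3 => /(_ isT).
case: i iN => [[|j] /= ij] /= _.
  by rewrite (minn_idPl (leq_trans (isT : (1 <= 2)%N) N2)) /ff /=; lra.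
have [jN|jN] := ltnP j.+1 N.
  by rewrite (minn_idPl jN); have := ff_sum j; lra.
have eN : N = j.+1 by apply/eqP; rewrite eqn_leq jN -ltnS ij.
rewrite eN (minn_idPr (leqnSn _)); have := ff_end0 (M := j); rewrite -eN => /(_ d3).
by rewrite mulr2n; lra.
Qed.

Definition Amat N : 'M[R]_N.+1 :=
  \matrix_(i, j) \sum_(l < 3) ((refl_idx N (i + 2 - l) == j)%:R).

Lemma Amul N p (x : 'M[R]_(N.+1, p)) i k :
  (Amat N *m x) i k = \sum_(l < 3) x (refl_idx N (i + 2 - l)) k.
Proof.
rewrite mxE; under eq_bigr do rewrite mxE big_distrl /=.
rewrite exchange_big; apply: eq_bigr => l _.
rewrite (bigD1 (refl_idx N (i + 2 - l))) //= eqxx mul1r big1 ?addr0 // => j.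
by rewrite eq_sym => /negbTE ->; rewrite mul0r.
Qed.

Lemma conv_fact m n (X : 'M[R]_(m.+1, n.+1)) :
  conv_refl (box_blur R) X = 9%:R^-1 *: (Amat m *m X *m (Amat n)^T).
Proof.
apply/matrixP => i j; rewrite [LHS]mxE [RHS]mxE.
rewrite -[(Amat m *m X *m _)]trmxK trmx_mul trmxK mxE Amul.
under [X in _ = _ * X]eq_bigr do rewrite mxE Amul.
rewrite mulr_sumr exchange_big; apply: eq_bigr => l1 _.
rewrite mulr_sumr; apply: eq_bigr => l2 _; by rewrite mxE.
Qed.

Lemma Amat_unit N : ~~ (3 %| N.+1)%N -> Amat N \in unitmx.
Proof.
move=> h3; rewrite -unitmx_tr -row_free_unit; apply: inj_row_free => v hv.
have h : forall i : 'I_N.+1, \sum_(l < 3) v 0 (refl_idx N (i + 2 - l)) = 0.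
  move=> i; have := congr1 trmx hv; rewrite trmx_mul trmxK trmx0.
  move/matrixP/(_ i 0); rewrite Amul mxE.
  by under eq_bigr do rewrite mxE.
by apply/rowP => j; rewrite mxE (ker1 h3 h j).
Qed.
End S.

Lemma conv0 (R : realType) m n : conv_refl (box_blur R) (0 : 'M[R]_(m.+1, n.+1)) = 0.
Proof.
apply/matrixP => i j; rewrite !mxE big1 // => l _; rewrite big1 // => l' _.
by rewrite (_ : (0 : 'M[R]_(m.+1, n.+1)) _ _ = 0) ?mulr0 // mxE.
Qed.

Theorem corollary3 (R : realType) (m n : nat) :
  (forall B : 'M[R]_(m.+1, n.+1),
      exists! X : 'M[R]_(m.+1, n.+1), conv_refl (box_blur R) X = B)
  <-> (~~ (3 %| m.+1)%N /\ ~~ (3 %| n.+1)%N).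
Proof.
split.
  move=> H; have [X [_ U]] := H 0.
  have e0 := U 0 (conv0 _ _ _).
  split; apply/negP => d.
    pose W : 'M[R]_(m.+1, n.+1) := \matrix_(i, j) ff R i.
    have : conv_refl (box_blur R) W = 0.
      apply/matrixP => i j; rewrite !mxE.
      under eq_bigr do under eq_bigr do rewrite !mxE.
      by rewrite exchange_big big1 // => l2 _; rewrite -mulr_sumr wsum // mulr0.
    move=> hW; have := U W hW; rewrite e0 => /matrixP/(_ 0 0).
    by rewrite !mxE /ff /= => h; move: (oner_neq0 R); rewrite -h eqxx.
  pose W : 'M[R]_(m.+1, n.+1) := \matrix_(i, j) ff R j.
  have : conv_refl (box_blur R) W = 0.
    apply/matrixP => i j; rewrite !mxE.
    under eq_bigr do under eq_bigr do rewrite !mxE.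
    by rewrite big1 // => l1 _; rewrite -mulr_sumr wsum // mulr0.
  move=> hW; have := U W hW; rewrite e0 => /matrixP/(_ 0 0).
  by rewrite !mxE /ff /= => h; move: (oner_neq0 R); rewrite -h eqxx.
case=> hm hn B.
have uA := Amat_unit R hm.
have uB : (Amat R n)^T \in unitmx by rewrite unitmx_tr; exact: (Amat_unit R hn).
have n9 : (9%:R : R) != 0 by rewrite pnatr_eq0.
exists (9%:R *: (invmx (Amat R m) *m B *m invmx (Amat R n)^T)); split.
  rewrite conv_fact -scalemxAr -scalemxAl scalerA mulVf // scale1r.
  by rewrite !mulmxA mulmxV // mul1mx -mulmxA mulVmx // mulmx1.
move=> X <-; rewrite conv_fact -scalemxAr -scalemxAl scalerA mulfV // scale1r.
by rewrite !mulmxA mulVmx // mul1mx -mulmxA mulmxV // mulmx1.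
Qed.
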